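(* The two identities $(xy)(zt)=(ty)(zx)$ and $x(xy)=y$ form an independent basis for $\Sigma_{2,4}$.
   Context: $\Sigma_{2,4}$ is the set of groupoid identities satisfied in the integers $\mathbb{Z}$ by both binary operations $x-y$ and $-x-y$. A basis is a set of identities whose equational consequences are exactly $\Sigma_{2,4}$; it is independent if no member is a consequence of the others. *)

(* Defs.v *)
From Stdlib Require Import ZArith.

Inductive term : Type :=
| Var : nat -> term
| Op : term -> term -> term.

Definition identity : Type := (term * term)%type.

Fixpoint eval {A : Type} (op : A -> A -> A) (v : nat -> A) (t : term) : A :=
  match t with
  | Var n => v n
  | Op s u => op (eval op v s) (eval op v u)
  end.

Definition satisfies {A : Type} (op : A -> A -> A) (e : identity) : Prop :=
  forall v : nat -> A, eval op v (fst e) = eval op v (snd e).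

Definition Sigma24 (e : identity) : Prop :=
  satisfies Z.sub e /\ satisfies (fun x y => (- x - y)%Z) e.

Fixpoint subst (s : nat -> term) (t : term) : term :=
  match t with
  | Var n => s n
  | Op a b => Op (subst s a) (subst s b)
  end.

Inductive derivable (E : identity -> Prop) : term -> term -> Prop :=
| der_ax : forall e, E e -> derivable E (fst e) (snd e)
| der_refl : forall t, derivable E t t
| der_sym : forall t u, derivable E t u -> derivable E u t
| der_trans : forall t u w, derivable E t u -> derivable E u w -> derivable E t w
| der_subst : forall (s : nat -> term) t u,
    derivable E t u -> derivable E (subst s t) (subst s u)
| der_cong : forall t1 u1 t2 u2,
    derivable E t1 u1 -> derivable E t2 u2 -> derivable E (Op t1 t2) (Op u1 u2).

Definition is_basis_Sigma24 (E : identity -> Prop) : Prop :=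
  forall e : identity, derivable E (fst e) (snd e) <-> Sigma24 e.

Definition independent (E : identity -> Prop) : Prop :=
  forall e : identity, E e -> ~ derivable (fun f => E f /\ f <> e) (fst e) (snd e).

Definition vx := Var 0.
Definition vy := Var 1.
Definition vz := Var 2.
Definition vt := Var 3.

Definition id_medial_like : identity :=
  (Op (Op vx vy) (Op vz vt), Op (Op vt vy) (Op vz vx)).

Definition id_inv : identity := (Op vx (Op vx vy), vy).

Definition basis_3_2 (e : identity) : Prop := e = id_medial_like \/ e = id_inv.

(* Main.v *)
Require Import Defs.
From Stdlib Require Import ZArith Lia List Setoid Morphisms.
Import ListNotations.
From Stdlib Require Import Bool.
Open Scope bool_scope.

Definition D := derivable basis_3_2.

#[local] Instance D_equiv : Equivalence D.
Proof. split.
- intro; apply der_refl.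
- intros ? ? ?; apply der_sym; assumption.
- intros ? ? ? ? ?; eapply der_trans; eassumption.
Qed.

#[local] Instance Op_proper : Proper (D ==> D ==> D) Op.
Proof. intros ? ? ? ? ? ?; apply der_cong; assumption. Qed.

Lemma dI : forall a b, D (Op a (Op a b)) b.
Proof. intros a b.
  pose proof (der_subst basis_3_2 (fun n => match n with 0 => a | _ => b end) _ _
    (der_ax basis_3_2 id_inv (or_intror eq_refl))) as H. exact H. Qed.

Lemma dJ : forall a b, D b (Op a (Op a b)).
Proof. intros; symmetry; apply dI. Qed.

Lemma dM : forall a b c d, D (Op (Op a b) (Op c d)) (Op (Op d b) (Op c a)).
Proof. intros a b c d.
  pose proof (der_subst basis_3_2 (fun n => match n with 0 => a | 1 => b | 2 => c | _ => d end) _ _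
    (der_ax basis_3_2 id_medial_like (or_introl eq_refl))) as H. exact H. Qed.

Ltac dstep := solve [repeat first [apply dM | apply dI | apply dJ | apply der_refl | apply der_cong]].

Lemma eval_subst {A} (op : A -> A -> A) v s t :
  eval op v (subst s t) = eval op (fun n => eval op v (s n)) t.
Proof. induction t; simpl; congruence. Qed.

Lemma sound {A} (op : A -> A -> A) (E : identity -> Prop) :
  (forall e, E e -> satisfies op e) -> forall s t, derivable E s t -> forall v, eval op v s = eval op v t.
Proof.
  intros HE s t H; induction H; intro v.
  - apply HE; assumption.
  - reflexivity.
  - symmetry; auto.
  - rewrite IHderivable1; auto.
  - rewrite !eval_subst; auto.
  - simpl; rewrite IHderivable1, IHderivable2; reflexivity.
Qed.
Lemma dC : forall x y z w q, D (Op x (Op y (Op z (Op w q)))) (Op z (Op w (Op x (Op y q)))).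
Proof.
  intros x y z w q.
  transitivity (Op (Op q (Op q x)) (Op y (Op z (Op w q)))); [dstep|].
  transitivity (Op (Op (Op z (Op w q)) (Op q x)) (Op y q)); [dstep|].
  transitivity (Op (Op (Op z (Op w q)) (Op q x)) (Op z (Op z (Op y q)))); [dstep|].
  transitivity (Op (Op (Op z (Op y q)) (Op q x)) (Op z (Op z (Op w q)))); [dstep|].
  transitivity (Op (Op (Op z (Op y q)) (Op q x)) (Op w q)); [dstep|].
  transitivity (Op (Op (Op x (Op y q)) (Op q z)) (Op w q)); [dstep|].
  transitivity (Op (Op q (Op q z)) (Op w (Op x (Op y q)))); [dstep|].
  dstep.
Qed.
Lemma dB : forall x o, D x (Op (Op x o) (Op (Op o o) o)).
Proof.
  intros x o.
  transitivity (Op (Op o o) (Op (Op o o) x)); [dstep|].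
  dstep.
Qed.
Lemma dK : forall a z, D (Op (Op a (Op z z)) (Op z z)) a.
Proof.
  intros a z.
  transitivity (Op (Op z (Op z z)) (Op z a)); [dstep|].
  transitivity (Op z (Op z a)); [dstep|].
  dstep.
Qed.
Lemma dPb : forall a b q z, D (Op (Op a (Op b b)) (Op b q)) (Op (Op a z) (Op (Op b z) q)).
Proof.
  intros a b q z.
  transitivity (Op (Op (Op a (Op a a)) (Op b b)) (Op b q)); [dstep|].
  transitivity (Op (Op (Op b (Op a a)) (Op b a)) (Op b q)); [dstep|].
  transitivity (Op (Op q (Op b a)) (Op b (Op b (Op a a)))); [dstep|].
  transitivity (Op (Op q (Op b a)) (Op a a)); [dstep|].
  transitivity (Op (Op q (Op b a)) (Op (Op b z) (Op (Op b z) (Op a a)))); [dstep|].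
  transitivity (Op (Op (Op (Op b z) (Op a a)) (Op b a)) (Op (Op b z) q)); [dstep|].
  transitivity (Op (Op (Op a (Op a a)) (Op b (Op b z))) (Op (Op b z) q)); [dstep|].
  transitivity (Op (Op (Op a (Op a a)) z) (Op (Op b z) q)); [dstep|].
  dstep.
Qed.

Lemma dStar : forall x y z w, D (Op (Op x y) w) (Op (Op (Op z w) y) (Op z x)).
Proof. intros. rewrite <- (dM x y z (Op z w)). rewrite (dI z w). reflexivity. Qed.

Lemma dP : forall a b p y z, D (Op (Op a (Op b p)) y) (Op (Op a z) (Op (Op b z) (Op p y))).
Proof. intros.
  rewrite (dStar a (Op b p) b y).
  rewrite (dM b y b p).
  rewrite (dM (Op p y) (Op b b) b a).
  apply dPb.
Qed.

Lemma dR : forall x c d y, D (Op x (Op c (Op d y))) (Op d (Op c (Op x y))).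
Proof. intros.
  rewrite (dJ d (Op x (Op c (Op d y)))) at 1.
  rewrite (dC d x c d y). rewrite (dI d (Op x y)). reflexivity.
Qed.

Lemma dQ : forall a b z w q, D (Op (Op (Op a z) w) (Op (Op (Op b z) w) q)) (Op a (Op b q)).
Proof. intros.
  rewrite (dJ z q) at 1.
  rewrite <- (dP (Op a z) (Op b z) z (Op z q) w).
  rewrite <- (dI z z) at 3.
  rewrite <- (dP a b z (Op z z) z).
  rewrite (dM (Op a (Op b z)) (Op z z) z q).
  rewrite (dR z a b z).
  rewrite (dM q (Op z z) b (Op a (Op z z))).
  rewrite (dK a z). reflexivity.
Qed.

Definition o := Var 0.
Definition base (j : nat) : term := match j with 0 => Op o o | _ => Var j end.
Definition gen := (nat * bool * bool)%type.
Definition gapp (g : gen) (y : term) : term :=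
  let '(j, p, s) := g in
  let c := if p then Op (base j) o else base j in
  let d := if p then Op o o else o in
  if s then Op c (Op d y) else Op d (Op c y).
Definition wapp (w : list gen) (y : term) : term := fold_right gapp y w.
Definition gconj (g : gen) : gen := let '(j, p, s) := g in (j, negb p, s).
Definition ginv (g : gen) : gen := let '(j, p, s) := g in (j, p, negb s).

Fixpoint word (t : term) : list gen :=
  match t with
  | Var 0 => []
  | Var (S i) => [(S i, true, true)]
  | Op s u => map gconj (word s) ++ map ginv (word u) ++ [(0, true, true)]
  end.

Lemma gapp_proper g y y' : D y y' -> D (gapp g y) (gapp g y').
Proof. destruct g as [[j p] s]; intro H; simpl; destruct s; rewrite H; reflexivity. Qed.

Lemma wapp_proper w y y' : D y y' -> D (wapp w y) (wapp w y').
Proof. induction w; simpl; intro H; auto. apply gapp_proper; auto. Qed.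

Lemma wapp_app a b y : wapp (a ++ b) y = wapp a (wapp b y).
Proof. apply fold_right_app. Qed.

Lemma conj1 g p y : D (Op (gapp g p) y) (gapp (gconj g) (Op p y)).
Proof.
  destruct g as [[j q] s]; destruct q, s; simpl.
  - rewrite (dP _ _ p y o). apply dQ.
  - rewrite (dP _ _ p y o). apply dQ.
  - apply dP.
  - apply dP.
Qed.

Lemma conjw w p y : D (Op (wapp w p) y) (wapp (map gconj w) (Op p y)).
Proof.
  induction w as [|g w IH]; simpl. reflexivity.
  rewrite conj1. apply gapp_proper. exact IH.
Qed.

Lemma inv1 x g y : D (Op x (gapp g y)) (gapp (ginv g) (Op x y)).
Proof. destruct g as [[j q] s]; destruct s; simpl; apply dR. Qed.

Lemma invw x w y : D (Op x (wapp w y)) (wapp (map ginv w) (Op x y)).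
Proof.
  induction w as [|g w IH]; simpl. reflexivity.
  rewrite inv1. apply gapp_proper. exact IH.
Qed.

Lemma main t : D t (wapp (word t) o).
Proof.
  induction t as [n|s IHs u IHu].
  - destruct n; simpl. reflexivity. apply dB.
  - simpl. rewrite !wapp_app. rewrite IHs at 1. rewrite IHu at 1.
    rewrite conjw. apply wapp_proper. rewrite invw. apply wapp_proper.
    simpl. apply dB.
Qed.

Definition sg (s : bool) : Z := if s then 1%Z else (-1)%Z.
Fixpoint cnt (k : nat) (p : bool) (w : list gen) : Z :=
  match w with
  | [] => 0%Z
  | (j, q, s) :: w' => ((if Nat.eqb j k && Bool.eqb q p then sg s else 0) + cnt k p w')%Z
  end.

Lemma gen_eq_dec (g h : gen) : {g = h} + {g <> h}.
Proof. decide equality; try apply Bool.bool_dec. decide equality; [apply Bool.bool_dec | apply Nat.eq_dec]. Qed.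

Fixpoint rm (g : gen) (w : list gen) : list gen :=
  match w with
  | [] => []
  | h :: w' => if gen_eq_dec h g then w' else h :: rm g w'
  end.

Definition contrib (g : gen) (k : nat) (p : bool) : Z :=
  let '(j, q, s) := g in if Nat.eqb j k && Bool.eqb q p then sg s else 0%Z.

Lemma cnt_cons g w k p : cnt k p (g :: w) = (contrib g k p + cnt k p w)%Z.
Proof. destruct g as [[j q] s]; reflexivity. Qed.

Lemma cnt_rm g w k p : In g w -> cnt k p w = (contrib g k p + cnt k p (rm g w))%Z.
Proof.
  induction w as [|h w IH]; intro Hin; [contradiction|]. cbn [rm].
  destruct (gen_eq_dec h g) as [->|Hne].
  - apply cnt_cons.
  - destruct Hin as [->|Hin]; [congruence|].
    rewrite !cnt_cons, IH by exact Hin. lia.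
Qed.

Lemma length_rm g w : In g w -> length (rm g w) < length w.
Proof.
  induction w as [|h w IH]; simpl; intro Hin. contradiction.
  destruct (gen_eq_dec h g) as [->|Hne]. lia.
  destruct Hin as [->|Hin]; [congruence|]. simpl. specialize (IH Hin). lia.
Qed.

Lemma wapp_rm g w y : In g w -> D (wapp w y) (gapp g (wapp (rm g w) y)).
Proof.
  induction w as [|h w IH]; simpl; intro Hin. contradiction.
  destruct (gen_eq_dec h g) as [->|Hne]. reflexivity.
  destruct Hin as [->|Hin]; [congruence|]. simpl.
  rewrite (gapp_proper h _ _ (IH Hin)).
  destruct g as [[j q] s]; destruct h as [[j' q'] s']; destruct s, s'; simpl; apply dC.
Qed.

Lemma cancel g y : D (gapp g (gapp (ginv g) y)) y.
Proof. destruct g as [[j q] s]; destruct s; simpl; rewrite !dI; reflexivity. Qed.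

Lemma contrib_inv g k p : contrib (ginv g) k p = (- contrib g k p)%Z.
Proof. destruct g as [[j q] s]; simpl. destruct (Nat.eqb j k && Bool.eqb q p), s; reflexivity. Qed.

Definition key (g : gen) : nat * bool := let '(j, q, _) := g in (j, q).
Definition gs (g : gen) : Z := let '(_, _, s) := g in sg s.

Lemma contrib_self g : contrib g (fst (key g)) (snd (key g)) = gs g.
Proof. destruct g as [[j q] s]; simpl. rewrite Nat.eqb_refl, Bool.eqb_reflx. reflexivity. Qed.

Lemma sign_noinv g w : ~ In (ginv g) w -> (gs g * cnt (fst (key g)) (snd (key g)) w >= 0)%Z.
Proof.
  destruct g as [[j q] s]; unfold gs, key, ginv; cbn [fst snd].
  induction w as [|h w IH]; intro Hn. cbn. lia.
  destruct h as [[j' q'] s']. cbn [cnt].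
  assert (~ In (j, q, negb s) w) as Hn' by (intro; apply Hn; right; assumption). specialize (IH Hn').
  destruct (Nat.eqb_spec j' j); destruct (Bool.eqb_spec q' q); cbn [andb]; try lia.
  subst. destruct s, s'; unfold sg in *; try lia; exfalso; apply Hn; left; reflexivity.
Qed.

Lemma sign_nog g w : ~ In g w -> (gs g * cnt (fst (key g)) (snd (key g)) w <= 0)%Z.
Proof.
  destruct g as [[j q] s]; unfold gs, key; cbn [fst snd].
  induction w as [|h w IH]; intro Hn. cbn. lia.
  destruct h as [[j' q'] s']. cbn [cnt].
  assert (~ In (j, q, s) w) as Hn' by (intro; apply Hn; right; assumption). specialize (IH Hn').
  destruct (Nat.eqb_spec j' j); destruct (Bool.eqb_spec q' q); cbn [andb]; try lia.
  subst. destruct s, s'; unfold sg in *; try lia; exfalso; apply Hn; left; reflexivity.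
Qed.

Lemma gs_sq g : (gs g * gs g = 1)%Z.
Proof. destruct g as [[j q] s]; destruct s; reflexivity. Qed.

Definition sameCnt (w1 w2 : list gen) := forall k p, cnt k p w1 = cnt k p w2.

Lemma words_eq_n n : forall w1 w2 y, length w1 + length w2 < n -> sameCnt w1 w2 -> D (wapp w1 y) (wapp w2 y).
Proof.
  induction n as [|n IH]; intros w1 w2 y Hl Hc. lia.
  assert (Hne : forall g w1' w2', length (g :: w1') + length w2' < S n -> sameCnt (g :: w1') w2' ->
            D (wapp (g :: w1') y) (wapp w2' y)).
  { intros g w1' w2' Hl' Hc'.
    destruct (In_dec gen_eq_dec (ginv g) w1') as [Hi|Hi].
    - simpl. rewrite (gapp_proper g _ _ (wapp_rm _ _ y Hi)). rewrite cancel.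
      apply IH. pose proof (length_rm _ _ Hi). simpl in Hl'. lia.
      intros k p. rewrite <- Hc'. rewrite cnt_cons, (cnt_rm _ _ k p Hi), contrib_inv. lia.
    - destruct (In_dec gen_eq_dec g w2') as [Hg|Hg].
      + rewrite (wapp_rm _ _ y Hg). simpl. apply gapp_proper. apply IH.
        pose proof (length_rm _ _ Hg). simpl in Hl'. lia.
        intros k p. specialize (Hc' k p). rewrite cnt_cons, (cnt_rm _ _ k p Hg) in Hc'. lia.
      + exfalso. pose proof (sign_noinv _ _ Hi). pose proof (sign_nog _ _ Hg).
        specialize (Hc' (fst (key g)) (snd (key g))). rewrite cnt_cons, contrib_self in Hc'.
        pose proof (gs_sq g). rewrite <- Hc' in H0. nia. }
  destruct w1 as [|g w1']. destruct w2 as [|h w2']. reflexivity.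
  - symmetry. apply Hne. simpl in *; lia. intros k p; symmetry; apply Hc.
  - apply Hne; assumption.
Qed.

Definition op2 : Z -> Z -> Z := fun x y => (- x - y)%Z.
Definition dl (i : nat) : nat -> Z := fun n => if Nat.eqb n i then 1%Z else 0%Z.

Lemma ev_gapp g y i : i <> 0 ->
  eval Z.sub (dl i) (gapp g y) = (eval Z.sub (dl i) y + contrib g i true + contrib g i false)%Z /\
  eval op2 (dl i) (gapp g y) = (eval op2 (dl i) y + contrib g i true - contrib g i false)%Z /\
  eval Z.sub (fun _ => 1%Z) (gapp g y) = (eval Z.sub (fun _ => 1%Z) y - (contrib g 0 true + contrib g 0 false))%Z /\
  eval op2 (fun _ => 1%Z) (gapp g y) = (eval op2 (fun _ => 1%Z) y - 3 * (contrib g 0 true - contrib g 0 false))%Z.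
Proof.
  intro Hi. destruct g as [[j q] s]. unfold op2, dl.
  destruct i as [|i]; [congruence|].
  destruct j as [|j]; destruct q, s; cbn [gapp base o eval contrib fst snd Nat.eqb andb Bool.eqb sg];
    try (destruct (Nat.eqb j i)); cbn [andb]; lia.
Qed.

Lemma ev_wapp w y i : i <> 0 ->
  eval Z.sub (dl i) (wapp w y) = (eval Z.sub (dl i) y + cnt i true w + cnt i false w)%Z /\
  eval op2 (dl i) (wapp w y) = (eval op2 (dl i) y + cnt i true w - cnt i false w)%Z /\
  eval Z.sub (fun _ => 1%Z) (wapp w y) = (eval Z.sub (fun _ => 1%Z) y - (cnt 0 true w + cnt 0 false w))%Z /\
  eval op2 (fun _ => 1%Z) (wapp w y) = (eval op2 (fun _ => 1%Z) y - 3 * (cnt 0 true w - cnt 0 false w))%Z.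
Proof.
  intro Hi. induction w as [|g w IH].
  - cbn. lia.
  - change (wapp (g :: w) y) with (gapp g (wapp w y)).
    destruct (ev_gapp g (wapp w y) i Hi) as (A1 & A2 & A3 & A4).
    rewrite A1, A2, A3, A4, !cnt_cons. lia.
Qed.

Lemma sat_basis_sub : forall e, basis_3_2 e -> satisfies Z.sub e.
Proof. intros e [-> | ->]; intro v; cbn; lia. Qed.
Lemma sat_basis_op2 : forall e, basis_3_2 e -> satisfies (fun x y => (- x - y)%Z) e.
Proof. intros e [-> | ->]; intro v; cbn; lia. Qed.

Lemma complete s t : Sigma24 (s, t) -> D s t.
Proof.
  intros [H1 H2]. unfold satisfies in H1, H2; cbn [fst snd] in H1, H2.
  rewrite (main s), (main t). apply words_eq_n with (n := S (length (word s) + length (word t))). lia.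
  assert (E1 : forall v, eval Z.sub v (wapp (word s) o) = eval Z.sub v (wapp (word t) o)).
  { intro v. rewrite <- (sound _ _ sat_basis_sub _ _ (main s)), <- (sound _ _ sat_basis_sub _ _ (main t)). apply H1. }
  assert (E2 : forall v, eval op2 v (wapp (word s) o) = eval op2 v (wapp (word t) o)).
  { intro v. rewrite <- (sound _ _ sat_basis_op2 _ _ (main s)), <- (sound _ _ sat_basis_op2 _ _ (main t)). apply H2. }
  intros k p. destruct k as [|k].
  - destruct (ev_wapp (word s) o 1 ltac:(lia)) as (_ & _ & S3 & S4).
    destruct (ev_wapp (word t) o 1 ltac:(lia)) as (_ & _ & T3 & T4).
    pose proof (E1 (fun _ => 1%Z)) as e1. pose proof (E2 (fun _ => 1%Z)) as e2.
    rewrite S3, T3 in e1. rewrite S4, T4 in e2. destruct p; lia.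
  - destruct (ev_wapp (word s) o (S k) ltac:(lia)) as (S1 & S2 & _ & _).
    destruct (ev_wapp (word t) o (S k) ltac:(lia)) as (T1 & T2 & _ & _).
    pose proof (E1 (dl (S k))) as e1. pose proof (E2 (dl (S k))) as e2.
    rewrite S1, T1 in e1. rewrite S2, T2 in e2. destruct p; lia.
Qed.

Theorem theorem3p2 : is_basis_Sigma24 basis_3_2 /\ independent basis_3_2.
Proof.
  split.
  - intros [s t]. split.
    + intro H. split; intro v.
      * exact (sound _ _ sat_basis_sub _ _ H v).
      * exact (sound _ _ sat_basis_op2 _ _ H v).
    + apply complete.
  - intros e [-> | ->]; intro H.
    + assert (HE : forall f, (fun f => basis_3_2 f /\ f <> id_medial_like) f -> satisfies (fun x y : Z => y) f).
      { intros f [[-> | ->] Hf]; [congruence | intro v; reflexivity]. }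
      pose proof (sound (fun x y : Z => y) _ HE _ _ H (fun n => Z.of_nat n)) as Hc. cbn in Hc. discriminate.
    + assert (HE : forall f, (fun f => basis_3_2 f /\ f <> id_inv) f -> satisfies (fun x y : Z => 0%Z) f).
      { intros f [[-> | ->] Hf]; [intro v; reflexivity | congruence]. }
      pose proof (sound (fun x y : Z => 0%Z) _ HE _ _ H (fun n => 1%Z)) as Hc. cbn in Hc. discriminate.
Qed.
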